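(* Let $K \subsetneq L$ be an extension of fields such that $K$ is relatively algebraically closed in $L$ (every element of $L$ algebraic over $K$ lies in $K$). Let $W$ be the set of intermediate fields $F$ with $K \subset F \subset L$ such that $L$ has transcendence degree $1$ over $F$ and $F$ is relatively algebraically closed in $L$. Then $\bigcap_{F \in W} F = K$. *)

(* Defs.v *)
(* Fields are arbitrary (not necessarily finite-dimensional):
   we work inside the big field L : fieldType, and subfields of L are
   represented as Prop-valued subsets of L closed under the field operations. *)
From mathcomp Require Import all_boot all_algebra.
Set Implicit Arguments. Unset Strict Implicit. Unset Printing Implicit Defensive.
Import GRing.Theory.
Local Open Scope ring_scope.

Section FieldDefs.
Variable L : fieldType.

Definition is_subfield (S : L -> Prop) : Prop :=
  [/\ S 0, S 1,
      (forall x y, S x -> S y -> S (x - y)),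
      (forall x y, S x -> S y -> S (x * y)) &
      (forall x, S x -> x != 0 -> S x^-1)].

Definition algebraic_over (S : L -> Prop) (x : L) : Prop :=
  exists p : {poly L}, [/\ p != 0, (forall i, S p`_i) & root p x].

Definition rel_alg_closed (S : L -> Prop) : Prop :=
  forall x, algebraic_over S x -> S x.

Definition adjoin (S : L -> Prop) (t : L) : L -> Prop :=
  fun x => forall E : L -> Prop, is_subfield E -> (forall y, S y -> E y) ->
             E t -> E x.

(* L has transcendence degree 1 over F: {t} is a transcendence basis,
   i.e. t is transcendental (= algebraically independent) over F and
   L is algebraic over F(t). *)
Definition trdeg1_over (F : L -> Prop) : Prop :=
  exists t : L, ~ algebraic_over F t /\ (forall x, algebraic_over (adjoin F t) x).

End FieldDefs.

(* Main.v *)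
From HB Require Import structures.
Require Import Defs.
From mathcomp Require Import all_boot all_algebra.
From mathcomp Require Import ring.
From mathcomp Require Import boolp classical_sets.
Set Implicit Arguments. Unset Strict Implicit. Unset Printing Implicit Defensive.
Import GRing.Theory.
Local Open Scope ring_scope.
Record sfield (L : fieldType) := SField { sfP :> L -> Prop; sfH : is_subfield sfP }.

Section SubFieldType.
Variables (L : fieldType) (S : sfield L).
Definition sfb : {pred L} := fun x => `[< S x >].
Lemma sfbE x : (x \in sfb) = `[< S x >]. Proof. by []. Qed.
Lemma sfb_divring : divring_closed sfb.
Proof.
have [H0 H1 HB HM HV] := sfH S.
split; first by rewrite sfbE; apply/asboolP.
- by move=> x y; rewrite !sfbE => /asboolP hx /asboolP hy; apply/asboolP; apply: HB.
move=> x y; rewrite !sfbE => /asboolP hx /asboolP hy; apply/asboolP.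
have [->|y0] := eqVneq y 0; first by rewrite invr0 mulr0.
by apply: HM => //; apply: HV.
Qed.
HB.instance Definition _ := GRing.isDivringClosed.Build L sfb sfb_divring.
Record FS := mkFS { fsval : L; fsP : fsval \in sfb }.
HB.instance Definition _ := [isSub for fsval].
HB.instance Definition _ := [Choice of FS by <:].
HB.instance Definition _ := [SubChoice_isSubIntegralDomain of FS by <:].
HB.instance Definition _ := [SubIntegralDomain_isSubField of FS by <:].

Lemma inS x : S x <-> x \in sfb.
Proof. by rewrite sfbE; split => /asboolP. Qed.

Lemma valS (a : FS) : S (val a).
Proof. by apply/inS; case: a. Qed.

Lemma alg_conv x : algebraic_over S x <-> algebraicOver (val : FS -> L) x.
Proof.
split.
  case=> p [p0 pS px].
  pose q : {poly FS} := \poly_(i < size p) odflt 0 (insub p`_i).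
  have qp : map_poly val q = p.
    apply/polyP => i; rewrite coef_map coef_poly.
    case: ltnP => hi /=.
      by rewrite insubT /=; [apply/inS; apply: pS | move=> ?].
    by rewrite nth_default.
  exists q; last by rewrite qp.
  by move: p0; rewrite -qp map_poly_eq0.
case=> q q0 qx; exists (map_poly val q); split => //.
  by rewrite map_poly_eq0.
by move=> i; rewrite coef_map; apply: valS.
Qed.

Lemma horner_in (q : {poly L}) t :
  (forall i, S q`_i) -> S t -> S q.[t].
Proof.
move=> hq ht; rewrite horner_coef; apply/inS; apply: rpred_sum => i _.
by apply: rpredM; [apply/inS | apply: rpredX; apply/inS].
Qed.

End SubFieldType.

Section Alg.
Variable L : fieldType.

Lemma alg_mono (S T : L -> Prop) y : (forall a, S a -> T a) ->
  algebraic_over S y -> algebraic_over T y.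
Proof. by move=> ST [p [p0 pS py]]; exists p; split => // i; apply: ST. Qed.

Lemma alg_in (S : sfield L) y : S y -> algebraic_over S y.
Proof.
move=> Sy; apply/alg_conv.
have -> : y = val (Sub y ((inS S y).1 Sy) : FS S) by rewrite SubK.
exact: algebraic_id.
Qed.

Definition algcl (S : sfield L) : L -> Prop := fun y => algebraic_over S y.

Lemma algcl_subfield (S : sfield L) : is_subfield (algcl S).
Proof.
rewrite /algcl; split.
- by apply/alg_conv; apply: algebraic0.
- by apply/alg_conv; apply: algebraic1.
- by move=> x y /alg_conv hx /alg_conv hy; apply/alg_conv; apply: algebraic_sub.
- by move=> x y /alg_conv hx /alg_conv hy; apply/alg_conv; apply: algebraic_mul.
- by move=> x /alg_conv hx _; apply/alg_conv; apply: algebraic_inv.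
Qed.

Lemma algcl_rac (S : sfield L) : rel_alg_closed (algcl S).
Proof.
move=> y [p [p0 pS py]]; apply/alg_conv/integral_algebraic.
apply: (integral_root p0 py) => c /(nthP 0) [i _ <-].
by apply/integral_algebraic/alg_conv; apply: pS.
Qed.

End Alg.
Section Adj.
Variable L : fieldType.

Lemma adjoin_sub (S : L -> Prop) t : is_subfield (adjoin S t).
Proof.
split.
- by move=> E [] *.
- by move=> E [] *.
- move=> x y hx hy E HE ES Et; have [_ _ HB _ _] := HE; apply: HB; [exact: hx|exact: hy].
- move=> x y hx hy E HE ES Et; have [_ _ _ HM _] := HE; apply: HM; [exact: hx|exact: hy].
- move=> x hx x0 E HE ES Et; have [_ _ _ _ HV] := HE; apply: HV => //; exact: hx.
Qed.

Lemma adjoin_S (S : L -> Prop) t y : S y -> adjoin S t y.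
Proof. by move=> Sy E _ ES _; apply: ES. Qed.

Lemma adjoin_t (S : L -> Prop) t : adjoin S t t.
Proof. by move=> E _ _ Et. Qed.

Definition sadj (S : L -> Prop) t := SField (adjoin_sub S t).

Section Ratio.
Variables (S : sfield L) (t : L).
Definition ev (a : {poly FS S}) : L := (map_poly val a).[t].

Lemma evB a b : ev (a - b) = ev a - ev b.
Proof. by rewrite /ev rmorphB hornerD hornerN. Qed.
Lemma evM a b : ev (a * b) = ev a * ev b.
Proof. by rewrite /ev rmorphM hornerM. Qed.
Lemma ev1 : ev 1 = 1.
Proof. by rewrite /ev rmorph1 hornerC. Qed.
Lemma ev0 : ev 0 = 0.
Proof. by rewrite /ev rmorph0 horner0. Qed.
Lemma evC c : ev c%:P = val c.
Proof. by rewrite /ev map_polyC hornerC. Qed.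
Lemma evX : ev 'X = t.
Proof. by rewrite /ev map_polyX hornerX. Qed.

Definition Rat y := exists a b, ev b != 0 /\ y = ev a / ev b.

Lemma Rat_subfield : is_subfield Rat.
Proof.
split.
- by exists 0, 1; rewrite ev0 ev1 mul0r oner_neq0.
- by exists 1, 1; rewrite ev1 divr1 oner_neq0.
- move=> _ _ [a1 [b1 [h1 ->]]] [a2 [b2 [h2 ->]]].
  exists (a1 * b2 - a2 * b1), (b1 * b2); rewrite evB !evM mulf_neq0 //; split => //.
  by field; rewrite h1 h2.
- move=> _ _ [a1 [b1 [h1 ->]]] [a2 [b2 [h2 ->]]].
  exists (a1 * a2), (b1 * b2); rewrite !evM mulf_neq0 //; split => //.
  by field; rewrite h1 h2.
- move=> _ [a [b [h ->]]] nz; exists b, a.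
  have ha : ev a != 0 by apply: contraNneq nz => ->; rewrite mul0r.
  by split => //; field; rewrite ha h.
Qed.

Lemma adjoin_Rat y : adjoin S t y -> Rat y.
Proof.
move=> h; apply: h; first exact: Rat_subfield.
  move=> a Sa; exists (Sub a ((inS S a).1 Sa))%:P, 1.
  by rewrite ev1 evC divr1 SubK oner_neq0.
by exists 'X, 1; rewrite evX ev1 divr1 oner_neq0.
Qed.

Lemma ev_polyC (b : {poly FS S}) :
  (map_poly (map_poly val) (map_poly polyC b)).[t%:P] = (ev b)%:P.
Proof.
rewrite -map_poly_comp.
have -> : map_poly (map_poly val \o polyC) b = map_poly polyC (map_poly val b).
  by apply/polyP => i; rewrite !coef_map /=; exact: (map_polyC (val : {rmorphism FS S -> L})).
by rewrite horner_map.
Qed.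

Lemma clear_den (p : {poly L}) : (forall i, adjoin S t p`_i) ->
  exists (P : {poly {poly FS S}}) (d : {poly FS S}),
    ev d != 0 /\ (map_poly (map_poly val) P).[t%:P] = ev d *: p.
Proof.
elim/poly_ind: p => [|q c IH] hp.
  by exists 0, 1; rewrite ev1 oner_neq0 rmorph0 horner0 scaler0.
have hq : forall i, adjoin S t q`_i.
  by move=> i; move: (hp i.+1); rewrite coefD coefMX coefC /= addr0.
have hc : adjoin S t c.
  by move: (hp 0%N); rewrite coefD coefMX coefC /= add0r.
have [Pq [dq [hdq eq]]] := IH hq.
have [a [b [hb ec]]] := adjoin_Rat hc.
exists (Pq * ('X%:P) * map_poly polyC b + map_poly polyC (a * dq)), (dq * b).
rewrite evM mulf_neq0 //; split => //.
rewrite rmorphD !rmorphM hornerD !hornerM eq !ev_polyC.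
set Y := (X in X.[t%:P]).
have f0 : fsval (0 : FS S) = 0 by exact: (rmorph0 (val : {rmorphism FS S -> L})).
have -> : Y = ('X : {poly L})%:P.
  apply/polyP => i; rewrite /Y /= coef_map_id0; last first.
    by apply/polyP => j; rewrite coef_map_id0 // !coef0.
  rewrite !coefC; case: i => [|i] /=.
    by apply/polyP => j; rewrite coef_map_id0 // !coefX; case: (j == 1)%N.
  by apply/polyP => j; rewrite coef_map_id0 // !coef0.
rewrite hornerC -!mul_polyC polyCM.
have -> : (ev a)%:P = c%:P * (ev b)%:P by rewrite -polyCM ec divfK.
move: c%:P (ev b)%:P (ev dq)%:P => u v w.
ring.
Qed.

End Ratio.
End Adj.
Section Exch.
Variable L : fieldType.

Lemma exchange (S : sfield L) x z : ~ algebraic_over S x ->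
  algebraic_over (adjoin S z) x -> algebraic_over (adjoin S x) z.
Proof.
move=> nx [p [p0 pS px]].
have [P [d [hd eq]]] := clear_den pS.
set U := map_poly (map_poly val) P in eq.
have coefr i : ((swapXY U).[x%:P])`_i = (map_poly val P`_i).[x].
  by rewrite horner_swapXY coef_map /= coef_map.
exists ((swapXY U).[x%:P]); split.
- apply/eqP => h; move/eqP: p0; apply.
  have P0 : P = 0.
    apply/polyP => i; rewrite coef0; apply/eqP; apply/negPn/negP => nzP.
    apply: nx; apply/alg_conv; exists P`_i => //.
    by rewrite /root -coefr h coef0.
  move: eq; rewrite /U P0 rmorph0 horner0 => /esym/eqP.
  by rewrite scaler_eq0 (negPf hd) => /eqP.
- move=> i; rewrite coefr.
  apply: (horner_in (S := sadj S x)); last exact: adjoin_t.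
  by move=> j; rewrite coef_map /=; apply: adjoin_S; apply: valS.
- by rewrite /root horner2_swapXY eq hornerZ (rootP px) mulr0.
Qed.

End Exch.
Section Main.
Variables (L : fieldType) (K : L -> Prop) (x : L).

Definition good (E : L -> Prop) := [/\ is_subfield E, (forall y, K y -> E y),
  rel_alg_closed E & ~ algebraic_over E x].

Definition GT := {E : L -> Prop | good E}.
Definition GR (A B : GT) : bool := `[< forall y, sval A y -> sval B y >].

Lemma chain_ub (A : set GT) (s0 : GT) : A s0 -> total_on A GR ->
  exists t : GT, forall s, A s -> GR s t.
Proof.
move=> As0 tot.
pose U := fun y => exists s, A s /\ sval s y.
have dir : forall (f : nat -> L) n, (forall i, (i < n)%N -> U (f i)) ->
    exists s, A s /\ forall i, (i < n)%N -> sval s (f i).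
  move=> f; elim=> [|n IH] hf; first by exists s0.
  have [s1 [As1 h1]] := IH (fun i hi => hf i (ltnW hi)).
  have [s2 [As2 h2]] := hf n (ltnSn n).
  have [/asboolP r12|/asboolP r21] := tot _ _ As1 As2.
    exists s2; split => // i; rewrite ltnS leq_eqVlt => /orP[/eqP->//|hi].
    by apply: r12; apply: h1.
  exists s1; split => // i; rewrite ltnS leq_eqVlt => /orP[/eqP->|hi].
    exact: r21.
  exact: h1.
have two : forall a b, U a -> U b -> exists s, [/\ A s, sval s a & sval s b].
  move=> a b ha hb.
  have [s [As hs]] := dir (fun i => if i == 0%N then a else b) 2%N
    (fun i _ => if i == 0%N as c return U (if c then a else b) then ha else hb).
  by exists s; split => //; [apply: (hs 0%N) | apply: (hs 1%N)].
have polyin : forall p : {poly L}, (forall i, U p`_i) ->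
    exists s, A s /\ forall i, sval s p`_i.
  move=> p hp; have [s [As hs]] := dir (fun i => p`_i) (size p) (fun i _ => hp i).
  exists s; split => // i; case: (ltnP i (size p)) => hi; first exact: hs.
  rewrite nth_default //; case: s {As hs} => E [[]] //.
have gU : good U.
  split.
  - split.
    + by exists s0; split => //; have [[H0 _ _ _ _] _ _ _] := svalP s0.
    + by exists s0; split => //; have [[_ H1 _ _ _] _ _ _] := svalP s0.
    + move=> a b ha hb; have [s [As sa sb]] := two a b ha hb.
      by exists s; split => //; have [[_ _ HB _ _] _ _ _] := svalP s; apply: HB.
    + move=> a b ha hb; have [s [As sa sb]] := two a b ha hb.
      by exists s; split => //; have [[_ _ _ HM _] _ _ _] := svalP s; apply: HM.
    + move=> a [s [As sa]] a0.
      by exists s; split => //; have [[_ _ _ _ HV] _ _ _] := svalP s; apply: HV.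
  - by move=> y Ky; exists s0; split => //; have [_ KE _ _] := svalP s0; apply: KE.
  - move=> y [p [p0 pU py]]; have [s [As hs]] := polyin p pU.
    by exists s; split => //; have [_ _ rac _] := svalP s; apply: rac; exists p.
  - move=> [p [p0 pU px]]; have [s [As hs]] := polyin p pU.
    by have [_ _ _ nx] := svalP s; apply: nx; exists p.
by exists (exist _ U gU) => s As; apply/asboolP => y sy; exists s.
Qed.
End Main.
Unset Implicit Arguments. Set Strict Implicit.

Theorem lemma3p8 (L : fieldType) (K : L -> Prop) :
  is_subfield K ->
  (exists x : L, ~ K x) ->
  rel_alg_closed K ->
  forall x : L,
    (forall F : L -> Prop,
        is_subfield F -> (forall y, K y -> F y) ->
        trdeg1_over F -> rel_alg_closed F -> F x)
    <-> K x.
Proof.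
move=> HK _ racK x; split; last by move=> Kx F _ KF _ _; apply: KF.
move=> H; apply: contrapT => nKx.
have nax : ~ algebraic_over K x by move/racK.
have g0 : good K x K by split.
pose t0 : GT K x := exist _ K g0.
have r1 : forall s : GT K x, GR s s by move=> s; apply/asboolP.
have r2 : forall r s u : GT K x, GR r s -> GR s u -> GR r u.
  by move=> r s u /asboolP h1 /asboolP h2; apply/asboolP => y /h1 /h2.
have r3 : forall A : set (GT K x), total_on A (fun a b => GR a b) ->
    exists t, forall s, A s -> GR s t.
  move=> A tot.
  have [[s0 As0]|nA] := pselect (exists s, A s).
    exact: (chain_ub As0 tot).
  by exists t0 => s As; exfalso; apply: nA; exists s.
have [t tmax] := @ZL_preorder (GT K x) t0 (@GR L K x) r1 r2 r3.
case: t tmax => E [sE KE racE naE] tmax /=.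
pose SE := SField sE.
have Ex : E x.
  apply: H => //; exists x; split => // z; apply: contrapT => nz.
  pose Ac := algcl (sadj SE z).
  have gA : good K x Ac.
    split.
    - exact: algcl_subfield.
    - by move=> y Ky; apply: alg_in; apply: adjoin_S; exact: (KE _ Ky).
    - exact: algcl_rac.
    - move=> ax; apply: nz; apply: (exchange (S := SE)) => //.
      exact: (algcl_rac ax).
  have tA : GR (exist _ E (And4 sE KE racE naE)) (exist _ Ac gA).
    by apply/asboolP => y Ey; apply: alg_in; apply: adjoin_S.
  have /asboolP /= AE := tmax _ tA.
  have Ez : E z := AE z (alg_in (S := sadj SE z) (@adjoin_t _ E z)).
  by apply: nz; apply: (alg_in (S := sadj SE x)); apply: adjoin_S.
by apply naE; exact: (alg_in (S := SE) Ex).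
Qed.
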